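(* Let $A$ and $B=\{b_1,\ldots,b_m\}$ be finite point sets in $\mathbb{R}^2$ with $m\le|A|$, let $t\in\mathbb{R}^2$, and let $\mathcal{L}=\{L_t(b_i)\mid i=1,\ldots,m\}$ be the preference lists at $t$. Let $a_1,\ldots,a_m$ be $m$ distinct points of $A$, and suppose that for some $0\le j\le m-1$: (a) $L_t(b_i)$ starts with $(a_1,a_2,\ldots,a_j)$ for $i=1,\ldots,j$; (b) $L_t(b_{j+1})$ starts with $a_{j+1}$; (c) $L_t(b_i)$ starts with $(a_{j+2},\ldots,a_m)$ for $i=j+2,\ldots,m$. Then every efficient matching for $\mathcal{L}$ matches $B$ onto $\{a_1,\ldots,a_m\}$.
   Context: The preference list $L_t(b)$ of $b\in B$ is the list of all points of $A$ sorted by increasing distance from $b+t$ (a strict ordering, ties broken in some fixed way). A matching is an injective map $\pi:B\to A$. A matching $\pi$ is better than a distinct matching $\sigma$ if for each $b\in B$ either $\pi(b)=\sigma(b)$ or $\pi(b)$ appears before $\sigma(b)$ in $L_t(b)$. A matching is efficient if no matching is better than it. *)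

(* Defs.v *)
From mathcomp Require Import all_boot all_order all_algebra.
From mathcomp Require Import reals.
Set Implicit Arguments. Unset Strict Implicit. Unset Printing Implicit Defensive.
Import Order.TTheory GRing.Theory Num.Theory.
Local Open Scope ring_scope.

Definition point (R : realType) := (R * R)%type.

Definition padd (R : realType) (p q : point R) : point R := (p.1 + q.1, p.2 + q.2).

Definition dist (R : realType) (p q : point R) : R :=
  Num.sqrt ((p.1 - q.1) ^+ 2 + (p.2 - q.2) ^+ 2).

(* L is a preference list L_t(b) of b with respect to the finite point set A
   (given as a duplicate-free sequence): it lists every point of A exactly once,
   sorted by increasing distance from b + t (ties broken in some way). *)
Definition is_pref_list (R : realType) (A : seq (point R)) (t b : point R)
    (L : seq (point R)) : Prop :=
  perm_eq L A /\ sorted (fun x y => dist x (padd b t) <= dist y (padd b t)) L.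

Definition is_matching (R : realType) (A B : seq (point R))
    (pi : point R -> point R) : Prop :=
  {in B, forall x, pi x \in A} /\ {in B &, injective pi}.

Definition better (R : realType) (B : seq (point R))
    (L : point R -> seq (point R)) (pi sigma : point R -> point R) : Prop :=
  (exists2 x, x \in B & pi x != sigma x) /\
  {in B, forall x, pi x = sigma x \/ (index (pi x) (L x) < index (sigma x) (L x))%N}.

Definition efficient (R : realType) (A B : seq (point R))
    (L : point R -> seq (point R)) (pi : point R -> point R) : Prop :=
  is_matching A B pi /\
  ~ (exists sigma, is_matching A B sigma /\ better B L sigma pi).

(* Main.v *)
Require Import Defs.
From mathcomp Require Import all_boot all_order all_algebra.
From mathcomp Require Import reals zify.
Import Order.TTheory GRing.Theory Num.Theory.
Local Open Scope ring_scope.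

Section Aux.
Variables (R : realType) (A B : seq (point R)) (L : point R -> seq (point R)).
Variable pi : point R -> point R.
Hypothesis eff : efficient A B L pi.

Lemma improve_contra {b x} : b \in B -> x \in A -> x \notin map pi B ->
  (index x (L b) < index (pi b) (L b))%N -> False.
Proof.
case: eff => [[piA piI] noB] bB xA xn lt.
apply: noB; exists (fun y => if y == b then x else pi y); split; [split|split].
- by move=> y yB; case: eqP => // _; apply: piA.
- move=> y z yB zB /=; case: (y =P b) => [->|_]; case: (z =P b) => [->|_] //.
  + by move=> E; move: xn; rewrite E map_f.
  + by move=> E; move: xn; rewrite -E map_f.
  + by apply: piI.
- exists b => //=; rewrite eqxx; apply/eqP => E; move: xn; by rewrite E map_f.
- move=> y yB /=; case: (y =P b) => [->|_]; [by right|by left].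
Qed.

Lemma in_prefix {b p x} : b \in B -> prefix p (L b) -> x \in p -> x \in A ->
  x \notin map pi B -> pi b \in p.
Proof.
move=> bB /prefixP [s Ls] xp xA xn; case np: (pi b \in p) => //; exfalso.
apply: (improve_contra bB xA xn).
rewrite Ls !index_cat xp np.
by apply: ltn_addr; rewrite index_mem.
Qed.

Lemma count_contra (I : seq nat) p x : uniq B -> uniq I -> all (fun i => i < size B)%N I ->
  uniq p -> (size p <= size I)%N ->
  (forall i, i \in I -> prefix p (L (nth (0,0) B i))) ->
  x \in p -> x \in A -> x \notin map pi B -> False.
Proof.
move=> uB uI /allP Ib up sz pre xp xA xn.
case: eff => [[piA piI] _].
set s := map (fun i => pi (nth (0,0) B i)) I.
have us : uniq s.
  rewrite map_inj_in_uniq // => i k iI kI /= E.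
  apply/eqP; rewrite -(nth_uniq (0,0) (Ib _ iI) (Ib _ kI) uB); apply/eqP.
  by apply: piI => //; apply: mem_nth; apply: Ib.
have sub : {subset s <= rem x p}.
  move=> y /mapP [i iI ->]; rewrite (mem_rem_uniq _ up) /=.
  have bB : nth (0,0) B i \in B by apply: mem_nth; apply: Ib.
  rewrite !inE (in_prefix bB (pre _ iI) xp xA xn) andbT.
  by apply/eqP => E; move: xn; rewrite -E map_f.
have := uniq_leq_size us sub; rewrite size_rem // size_map.
have p0 : (0 < size p)%N by rewrite lt0n size_eq0; apply/eqP => E; move: xp; rewrite E.
move: sz p0; clear; lia.
Qed.
End Aux.

Theorem lemma7 (R : realType) (A B : seq (point R)) (t : point R)
    (L : point R -> seq (point R)) (a : seq (point R)) (j : nat) :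
  uniq A -> uniq B -> (size B <= size A)%N ->
  {in B, forall b, is_pref_list A t b (L b)} ->
  uniq a -> size a = size B -> {subset a <= A} ->
  (j < size B)%N ->
  (* (a) L_t(b_i) starts with (a_1, ..., a_j) for i = 1..j *)
  (forall i, (i < j)%N -> prefix (take j a) (L (nth (0, 0) B i))) ->
  (* (b) L_t(b_{j+1}) starts with a_{j+1} *)
  prefix [:: nth (0, 0) a j] (L (nth (0, 0) B j)) ->
  (* (c) L_t(b_i) starts with (a_{j+2}, ..., a_m) for i = j+2..m *)
  (forall i, (j < i < size B)%N -> prefix (drop j.+1 a) (L (nth (0, 0) B i))) ->
  forall pi : point R -> point R, efficient A B L pi ->
    [seq pi b | b <- B] =i a.
Proof.
move=> uA uB _ _ ua sa aA jm Ha Hb Hc pi eff.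
have sub : {subset a <= map pi B}.
  move=> x xa; apply/negPn/negP => xn.
  have xA := aA _ xa.
  have km : (index x a < size B)%N by rewrite -sa index_mem.
  have xE : x = nth (0,0) a (index x a) by rewrite nth_index.
  case: (ltngtP (index x a) j) => [kj|kj|kj].
  - apply: (@count_contra R A B L pi eff (iota 0 j) (take j a) x) => //.
    + exact: iota_uniq.
    + by apply/allP => i; rewrite mem_iota add0n => /andP [_ /leq_trans]; apply; apply: ltnW.
    + exact: take_uniq.
    + by rewrite size_take sa jm size_iota.
    + by move=> i; rewrite mem_iota add0n => /andP [_]; apply: Ha.
    + by rewrite xE -(nth_take (0,0) kj) mem_nth // size_take sa jm.
  - apply: (@count_contra R A B L pi eff (iota j.+1 (size B - j.+1)) (drop j.+1 a) x) => //.
    + exact: iota_uniq.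
    + apply/allP => i; rewrite mem_iota => /andP [_].
      by rewrite subnKC.
    + exact: drop_uniq.
    + by rewrite size_drop size_iota sa.
    + move=> i; rewrite mem_iota => /andP [ji]; rewrite subnKC // => im.
      by apply: Hc; rewrite ji.
    + rewrite xE -(subnKC kj) -nth_drop mem_nth // size_drop sa.
      by rewrite ltn_sub2r // (leq_ltn_trans _ km).
  - apply: (@count_contra R A B L pi eff ([:: j]) ([:: nth (0,0) a j]) x) => //.
    + by rewrite /= jm.
    + by move=> i; rewrite inE => /eqP ->.
    + by rewrite inE xE kj.
have [_ H] := uniq_min_size ua sub (eq_leq (etrans (size_map _ _) (esym sa))).
by move=> y; rewrite H.
Qed.
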